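(* Let $\mathcal{U}$ be a UEC-representative. Then the set of maximal DAGs in the UEC of $\mathcal{U}$ is exactly one Markov equivalence class of DAGs.
   Context: For a DAG $\mathcal{D}$, a trek is a path with no repeated vertices and no collider; the unconditional dependence graph $\mathcal{U}^\mathcal{D}$ has an edge between distinct $v,w$ iff there is a trek between them. A UEC-representative is an undirected graph $\mathcal{U}$ with $\mathcal{U}=\mathcal{U}^\mathcal{D}$ for some DAG on the same vertex set; its UEC is $\{\mathcal{D}:\mathcal{U}^\mathcal{D}=\mathcal{U}\}$. A DAG in the UEC is maximal if every DAG obtained by adding one edge to it is not in the UEC. Two DAGs are Markov equivalent if they have the same d-separation statements, equivalently the same skeleton and the same v-structures. *)

(* Defs.v *)
(* A directed graph on a finite vertex set T is a relation
   e : rel T, with e v w meaning the directed edge v -> w. *)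
From mathcomp Require Import all_boot.
Set Implicit Arguments. Unset Strict Implicit. Unset Printing Implicit Defensive.

Section Graphs.
Variable T : finType.

Definition is_DAG (e : rel T) : Prop :=
  forall v w : T, e v w -> ~~ connect e w v.

Definition adj (e : rel T) : rel T := fun v w => e v w || e w v.

Definition has_collider (e : rel T) (v : T) (p : seq T) : Prop :=
  let s := v :: p in
  exists i : nat, i.+2 < size s /\
    e (nth v s i) (nth v s i.+1) /\ e (nth v s i.+2) (nth v s i.+1).

Definition trek (e : rel T) (v w : T) (p : seq T) : Prop :=
  [/\ p != [::], path (adj e) v p, uniq (v :: p), last v p = w
    & ~ has_collider e v p].

Definition udep (e : rel T) (v w : T) : Prop :=
  v != w /\ exists p : seq T, trek e v w p.

Definition in_UEC (U : rel T) (e : rel T) : Prop :=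
  is_DAG e /\ forall v w : T, U v w <-> udep e v w.

Definition UEC_rep (U : rel T) : Prop := exists e : rel T, in_UEC U e.

Definition add_edge (e : rel T) (a b : T) : rel T :=
  fun x y => e x y || ((x == a) && (y == b)).

Definition maximal_in_UEC (U : rel T) (e : rel T) : Prop :=
  in_UEC U e /\
  forall a b : T, a != b -> ~~ adj e a b ->
    is_DAG (add_edge e a b) -> ~ in_UEC U (add_edge e a b).

Definition vstruct (e : rel T) (a b c : T) : bool :=
  [&& e a b, e c b, a != c & ~~ adj e a c].

Definition markov_equiv (e1 e2 : rel T) : Prop :=
  (forall v w : T, adj e1 v w = adj e2 v w) /\
  (forall a b c : T, vstruct e1 a b c = vstruct e2 a b c).
End Graphs.

(* Main.v *)
Require Import Defs.
From mathcomp Require Import all_boot.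
From mathcomp Require Import zify.
Set Implicit Arguments. Unset Strict Implicit. Unset Printing Implicit Defensive.

Section Gen.
Variable T : finType.
Implicit Types (e f D : rel T).

Lemma conn_rel f (R : rel T) :
  (forall x, R x x) -> (forall x y z, R x y -> R y z -> R x z) ->
  (forall x y, f x y -> R x y) -> forall x y, connect f x y -> R x y.
Proof.
move=> Rr Rt Hf x y /connectP [p Hp ->] {y}.
elim: p x Hp => [|a p IH] x /=; first by [].
case/andP=> fxa Hp. exact: Rt (Hf _ _ fxa) (IH _ Hp).
Qed.

Lemma dag_noloop e x : is_DAG e -> ~~ e x x.
Proof. move=> H; apply/negP=> exx; by move: (H _ _ exx); rewrite connect0. Qed.

Lemma dag_no2 e x y : is_DAG e -> e x y -> ~~ e y x.
Proof. move=> H exy; apply/negP=> eyx; by move: (H _ _ exy); rewrite connect1. Qed.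

Lemma dag_pot e (g : T -> nat) : (forall x y, e x y -> g x < g y) -> is_DAG e.
Proof.
move=> Hg x y exy; apply/negP=> cyx.
have := @conn_rel e (fun a b => g a <= g b) (fun a => leqnn _)
   (fun a b c (h1 : g a <= g b) (h2 : g b <= g c) => leq_trans h1 h2)
   (fun a b h => ltnW (Hg a b h)) _ _ cyx.
have := Hg _ _ exy. lia.
Qed.

Fixpoint coll e (x : T) (p : seq T) : bool :=
  match p with
  | y :: ((z :: _) as p') => (e x y && e z y) || coll e y p'
  | _ => false
  end.

Lemma hc_coll e x p : has_collider e x p <-> coll e x p.
Proof.
elim: p x => [|y p IH] x.
  by split=> //; case=> i [].
case: p IH => [|z q] IH.
  by split=> //; case=> -[|[|i]] [].
have Hd : forall j, j < size [:: y, z & q] ->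
  nth x [:: y, z & q] j = nth y [:: y, z & q] j := fun j h => set_nth_default y x h.
split.
- case=> -[|i] [Hi [H1 H2]]; first by rewrite /= in H1 H2 *; rewrite H1 H2.
  apply/orP; right; apply/IH. exists i.
  change (is_true (e (nth x [:: y, z & q] i) (nth x [:: y, z & q] i.+1))) in H1.
  change (is_true (e (nth x [:: y, z & q] i.+2) (nth x [:: y, z & q] i.+1))) in H2.
  rewrite /= in Hi.
  rewrite !Hd /= in H1 H2; try lia.
  split; first (rewrite /=; lia). by [].
- move=> /orP [/andP [H1 H2]|/IH [i [Hi [H1 H2]]]].
    by exists 0.
  exists i.+1. rewrite /= in Hi.
  change (i.+3 < size [:: x, y, z & q] /\ is_true (e (nth x [:: y, z & q] i) (nth x [:: y, z & q] i.+1)) /\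
          is_true (e (nth x [:: y, z & q] i.+2) (nth x [:: y, z & q] i.+1))).
  rewrite !Hd /=; try lia.
  split; first lia. by [].
Qed.

Lemma cf_anc e x p : path (adj e) x p -> ~~ coll e x p ->
  connect e x (last x p) \/
  (exists y q, [/\ p = y :: q, e y x & exists t, connect e t x && connect e t (last x p)]).
Proof.
elim: p x => [|y p IH] x /=.
  by move=> _ _; left.
case/andP=> Hadj Hp Hc.
have Hc' : ~~ coll e y p.
  by move: Hc; case: p {IH Hp} => // z q; rewrite /= negb_or => /andP[].
have [exy|nexy] := boolP (e x y).
- case: (IH y Hp Hc') => [Hl|[z [q [Hpq ezy _]]]].
  + left. exact: connect_trans (connect1 exy) Hl.
  + by move: Hc; rewrite Hpq /= exy ezy.
- have eyx : e y x by move: Hadj; rewrite /adj (negbTE nexy).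
  right. exists y, p; split => //.
  case: (IH y Hp Hc') => [Hl|[z [q [-> ezy [t /andP[ty tl]]]]]].
  + by exists y; rewrite connect1 //= Hl.
  + exists t. rewrite tl andbT. exact: connect_trans ty (connect1 eyx).
Qed.

Lemma trek_anc e v w p : trek e v w p -> exists t, connect e t v && connect e t w.
Proof.
case=> _ Hp _ <- Hc.
have Hc' : ~~ coll e v p by apply/negP => /hc_coll.
case: (cf_anc Hp Hc') => [H|[y [q [_ _ [t Ht]]]]]; last by exists t.
by exists v; rewrite connect0.
Qed.

Lemma trek_neq e v w p : trek e v w p -> v != w.
Proof.
case=> + _ Hu <- _. case: p Hu => [|y q] Hu; first by rewrite eqxx.
move=> _; case/andP: Hu => Hv _.
apply/negP => /eqP Heq; move: Hv; rewrite {1}Heq /=.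
by rewrite mem_last.
Qed.

Lemma bf_nocoll e x q r : is_DAG e -> path (fun a b => e b a) x q ->
  path e (last x q) r -> ~~ coll e x (q ++ r).
Proof.
move=> He. elim: q x => [|y q IH] x /=.
- move=> _; elim: r x => [|y r IHr] x //= /andP[exy Hr].
  case: r IHr Hr => [|z r] IHr Hr //=.
  rewrite negb_or (IHr y Hr) andbT exy /=. move: Hr => /= /andP[eyz _].
  by rewrite (dag_no2 He eyz).
- case/andP=> eyx Hq Hr.
  have := IH y Hq Hr. case: (q ++ r) => [|z s] //= /negbTE ->. rewrite orbF.
  by rewrite (negbTE (dag_no2 He eyx)).
Qed.

Lemma last_rev_belast (t : T) p : last (last t p) (rev (belast t p)) = t.
Proof.
have H : last t p :: rev (belast t p) = rev (t :: p) by rewrite [t :: p]lastI rev_rcons.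
have -> : last (last t p) (rev (belast t p)) = last t (last t p :: rev (belast t p)) by [].
by rewrite H rev_cons last_rcons.
Qed.

Lemma anc_trek e : is_DAG e -> forall n t p1 p2, size p1 + size p2 <= n ->
  path e t p1 -> path e t p2 -> uniq (t :: p1) -> uniq (t :: p2) ->
  last t p1 != last t p2 ->
  exists p, trek e (last t p1) (last t p2) p.
Proof.
move=> He; elim=> [|n IH] t p1 p2 Hn P1 P2 U1 U2 Hne.
  move: Hn Hne; case: p1 {P1 U1} => [|? ?]; case: p2 {P2 U2} => [|? ?] //= _; by rewrite eqxx.
case: (boolP (has (mem p2) p1)) => [/hasP [u u1 u2] | Hdis].
  move: P1 U1 Hne Hn; case/splitPr: u1 => q1 r1.
  move: P2 U2; case/splitPr: u2 => q2 r2.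
  rewrite !cat_path !last_cat /= => /and3P [_ _ P2] U2 /and3P [_ _ P1].
  move=> /andP [_ U1] Hne Hn. move: U2 => /andP [_ U2].
  rewrite cat_uniq in U1; rewrite cat_uniq in U2; move: U1 U2 => /and3P[_ _ U1] /and3P[_ _ U2].
  apply: IH => //. rewrite !size_cat /= in Hn. lia.
set v := last t p1.
exists (rev (belast t p1) ++ p2).
have HL : last v (rev (belast t p1)) = t by apply: last_rev_belast.
split.
- apply/eqP => Hp. move: Hne. 
  have : last v (rev (belast t p1) ++ p2) = last t p2 by rewrite last_cat HL.
  by rewrite Hp /= /v => <-; rewrite eqxx.
- rewrite cat_path HL. apply/andP; split.
    rewrite rev_path. apply: sub_path P1 => a b h. by rewrite /adj h orbT.
  apply: sub_path P2 => a b h. by rewrite /adj h.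
- have -> : v :: (rev (belast t p1) ++ p2) = rev (t :: p1) ++ p2.
    by rewrite /v -cat_cons [t :: p1]lastI rev_rcons.
  rewrite cat_uniq rev_uniq U1 /= has_sym has_rev /= negb_or Hdis andbT.
  by move: U2 => /= /andP [-> ->].
- by rewrite last_cat HL.
- move/hc_coll; apply/negP; apply: bf_nocoll => //.
    by rewrite rev_path.
  by rewrite HL.
Qed.

Lemma udepP e v w : is_DAG e ->
  udep e v w <-> v != w /\ exists t, connect e t v && connect e t w.
Proof.
move=> He; split.
  case=> Hne [p Hp]; split => //; exact: trek_anc Hp.
case=> Hne [t /andP [tv tw]]; split => //.
case/connectP: tv => p1 P1 Ev. case/connectP: tw => p2 P2 Ew.
subst v w.
case/shortenP: P1 Hne => p1' P1' U1' _.
case/shortenP: P2 => p2' P2' U2' _ Hne.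
exact: (anc_trek He (leqnn _) P1' P2' U1' U2' Hne).
Qed.

End Gen.

Section Main.
Variable T : finType.
Implicit Types (e f D : rel T).

Definition nsub (U : rel T) (x y : T) : bool :=
  [forall z, ((z == x) || U z x) ==> ((z == y) || U z y)].

Lemma nsub_refl U x : nsub U x x.
Proof. by apply/forallP => z; rewrite implybb. Qed.

Lemma nsub_trans U x y z : nsub U x y -> nsub U y z -> nsub U x z.
Proof.
move=> /forallP H1 /forallP H2; apply/forallP => u; apply/implyP => H.
exact: (implyP (H2 u)) ((implyP (H1 u)) H).
Qed.

Definition src e s := [forall y, ~~ e y s].

Lemma min_elt D (P : pred T) u : is_DAG D -> P u ->
  exists t, [/\ P t, connect D t u & forall u', P u' -> ~~ D u' t].
Proof.
move=> HD.
have : #|[set x | connect D x u]| < #|T|.+1 by rewrite ltnS max_card.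
move: #|T|.+1 => n.
elim: n u => [|n IH] u Hn Pu; first by [].
have [/existsP [u' /andP [Pu' Du']]|Hno] := boolP [exists u', P u' && D u' u].
- have Hlt : #|[set x | connect D x u']| < #|[set x | connect D x u]|.
    apply: proper_card. apply/properP; split.
    + apply/subsetP => x; rewrite !inE => Hx; exact: connect_trans Hx (connect1 Du').
    + exists u; rewrite !inE ?connect0 //; exact: HD _ _ Du'.
  have [t [Pt Ct Ht]] := IH u' (leq_trans Hlt Hn) Pu'.
  exists t; split => //; exact: connect_trans Ct (connect1 Du').
- exists u; split => // u' Pu'; apply/negP => Du'; move/negP: Hno; apply.
  by apply/existsP; exists u'; rewrite Pu'.
Qed.

Lemma anc_src e v : is_DAG e -> exists s, src e s /\ connect e s v.
Proof.
move=> He; have [t [_ Ct Ht]] := @min_elt e predT v He isT.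
exists t; split => //; apply/forallP => y; exact: Ht.
Qed.

Lemma src_eq e s t : src e s -> connect e t s -> t = s.
Proof.
move=> /forallP Hs Hc; apply/eqP.
pose R := fun x y : T => (y == s) ==> (x == s).
have R1 : forall x, R x x by move=> x; rewrite /R implybb.
have R2 : forall x y z, R x y -> R y z -> R x z.
  move=> x y z H1 H2; apply/implyP => /(implyP H2); exact: (implyP H1).
have R3 : forall x y, e x y -> R x y.
  move=> x y exy; apply/implyP => /eqP Hy; subst y. by move: (Hs x); rewrite exy.
by move: (conn_rel R1 R2 R3 Hc); rewrite /R eqxx.
Qed.

Lemma conn_add_mono D a b x y : connect D x y -> connect (add_edge D a b) x y.
Proof.
apply: (@conn_rel _ D (connect (add_edge D a b))).
- by move=> u; apply: connect0.
- by move=> u v w; apply: connect_trans.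
- by move=> u w h; apply: connect1; rewrite /add_edge h.
Qed.

Section UEC.
Variables (U e : rel T).
Hypothesis He : in_UEC U e.

Lemma UP v w : U v w <-> v != w /\ exists t, connect e t v && connect e t w.
Proof.
split => [/(He.2 v w)/(udepP _ _ He.1) //|H].
by apply/(He.2 v w)/(udepP _ _ He.1).
Qed.

Lemma Nchar z x : (z == x) || U z x <-> exists s, [/\ src e s, connect e s z & connect e s x].
Proof.
split.
- case/orP => [/eqP ->|/UP [_ [t /andP [tz tx]]]].
    by have [s [Ss Cs]] := anc_src x He.1; exists s.
  have [s [Ss Cs]] := anc_src t He.1; exists s; split => //; exact: connect_trans Cs _.
- case=> s [Ss Cz Cx]; case: (boolP (z == x)) => //= Hzx.
  by apply/UP; split => //; exists s; rewrite Cz Cx.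
Qed.

Lemma nsub_src x y : nsub U x y <-> forall s, src e s -> connect e s x -> connect e s y.
Proof.
split.
- move=> /forallP H s Ss Cx.
  have /Nchar [s' [Ss' Cs' Cy]] := implyP (H s) (proj2 (Nchar s x) (ex_intro _ s (And3 Ss (connect0 _ _) Cx))).
  by rewrite -(src_eq Ss Cs').
- move=> H; apply/forallP => z; apply/implyP => /Nchar [s [Ss Cz Cx]].
  by apply/Nchar; exists s; split => //; apply: H.
Qed.

Lemma G1 x y : connect e x y -> nsub U x y.
Proof. by move=> Cxy; apply/nsub_src => s _ Cx; exact: connect_trans Cx Cxy. Qed.

Lemma G2 t v w : v != w -> nsub U t v -> nsub U t w -> U v w.
Proof.
move=> Hne /nsub_src Hv /nsub_src Hw.
have [s [Ss Cs]] := anc_src t He.1.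
by apply/UP; split => //; exists s; rewrite (Hv s Ss Cs) (Hw s Ss Cs).
Qed.

Lemma src_nsub s v : src e s -> nsub U s v -> connect e s v.
Proof. by move=> Ss /nsub_src H; apply: H => //; exact: connect0. Qed.

Lemma nsub_to_src s y : src e s -> nsub U y s -> connect e s y.
Proof.
move=> Ss /nsub_src H.
have [s' [Ss' Cs']] := anc_src y He.1.
by rewrite -(src_eq Ss (H s' Ss' Cs')).
Qed.

Lemma conn_nsub f : (forall x y, f x y -> nsub U x y) ->
  forall x y, connect f x y -> nsub U x y.
Proof. move=> Hf; apply: conn_rel => //; [exact: nsub_refl|exact: nsub_trans]. Qed.

End UEC.

Definition Pmax U D :=
  (forall x y, D x y -> nsub U x y) /\ (forall x y, x != y -> nsub U x y -> adj D x y).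

Lemma Q U e D : in_UEC U e -> is_DAG D -> Pmax U D -> in_UEC U D.
Proof.
move=> He HD [P1 P2]; split => // v w; split.
- move=> /(UP He) [Hne [t0 /andP [t0v t0w]]].
  have [s [Ss Cs]] := anc_src t0 He.1.
  have Ps : nsub U s s && nsub U s s by rewrite nsub_refl.
  have [t [/andP [ts st] Ct Ht]] :=
    @min_elt D (fun u => nsub U u s && nsub U s u) s HD Ps.
  have claim : forall x, nsub U s x -> connect D t x.
    move=> x Hsx. have Htx := nsub_trans ts Hsx.
    case: (boolP (t == x)) => [/eqP <-|Hne']; first exact: connect0.
    case/orP: (P2 _ _ Hne' Htx) => [Dtx|Dxt]; first exact: connect1.
    have Hxt := P1 _ _ Dxt.
    by move: (Ht x); rewrite (nsub_trans Hxt ts) Hsx Dxt => /(_ isT).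
  apply/udepP => //; split => //; exists t.
  by rewrite !claim //; apply: (G1 He); apply: connect_trans Cs _.
- move=> /(udepP _ _ HD) [Hne [t /andP [tv tw]]].
  have Hc := conn_nsub P1.
  exact: (G2 He Hne (Hc _ _ tv) (Hc _ _ tw)).
Qed.

Lemma PM_max U D : in_UEC U D -> Pmax U D -> maximal_in_UEC U D.
Proof.
move=> HD [P1 P2]; split => // a b Hab Hnadj Hdag Hin.
have Hns : ~~ nsub U a b by apply/negP => H; move: Hnadj; rewrite (P2 _ _ Hab H).
move/forallPn: Hns => [z]; rewrite negb_imply => /andP [Hza].
rewrite negb_or => /andP [Hzb1 Hzb2].
move/negP: Hzb2; apply. apply/(Hin.2 z b)/udepP => //; split => //.
have Hab' : connect (add_edge D a b) a b by apply: connect1; rewrite /add_edge !eqxx orbT.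
case/orP: Hza => [/eqP ->|Hza].
  by exists a; rewrite connect0 Hab'.
move/(HD.2 z a)/(udepP _ _ HD.1): Hza => [_ [t /andP [tz ta]]].
exists t; rewrite conn_add_mono //=.
exact: connect_trans (conn_add_mono a b ta) Hab'.
Qed.

Lemma add_ok U D a b : in_UEC U D -> nsub U a b -> ~~ connect D b a ->
  is_DAG (add_edge D a b) /\ in_UEC U (add_edge D a b).
Proof.
move=> HD Hab Hba.
have Hdag : is_DAG (add_edge D a b).
  pose R := fun x y => connect D x y || (connect D x a && connect D b y).
  have R1 : forall x, R x x by move=> x; rewrite /R connect0.
  have R2 : forall x y z, R x y -> R y z -> R x z.
    rewrite /R; move=> x y z /orP [Cxy|/andP [Cxa Cby]] /orP [Cyz|/andP [Cya Cbz]].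
    * by rewrite (connect_trans Cxy Cyz).
    * by rewrite (connect_trans Cxy Cya) Cbz orbT.
    * by rewrite Cxa (connect_trans Cby Cyz) orbT.
    * by rewrite Cxa Cbz orbT.
  have R3 : forall x y, add_edge D a b x y -> R x y.
    rewrite /R; move=> x y /orP [Dxy|/andP [/eqP -> /eqP ->]]; first by rewrite connect1.
    by rewrite !connect0 orbT.
  move=> v w Hvw; apply/negP => Cwv.
  move: (conn_rel R1 R2 R3 Cwv); rewrite /R.
  case/orP: Hvw => [Dvw|/andP [/eqP Hv /eqP Hw]].
  + case/orP => [Cwv'|/andP [Cwa Cbv]]; first by move: (HD.1 _ _ Dvw); rewrite Cwv'.
    by move: Hba; rewrite (connect_trans (connect_trans Cbv (connect1 Dvw)) Cwa).
  + subst v w; case/orP => [Cba|/andP [Cba _]]; by rewrite Cba in Hba.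
split => //; split => // v w; split.
- move/(HD.2 v w)/(udepP _ _ HD.1) => [Hne [t /andP [tv tw]]].
  apply/udepP => //; split => //; exists t; by rewrite !conn_add_mono.
- move/(udepP _ _ Hdag) => [Hne [t /andP [tv tw]]].
  have Hf : forall x y, add_edge D a b x y -> nsub U x y.
    move=> x y /orP [Dxy|/andP [/eqP -> /eqP ->] //]. apply: (G1 HD); exact: connect1.
  exact: (G2 HD Hne (conn_nsub Hf tv) (conn_nsub Hf tw)).
Qed.

Lemma dag_conn_asym D x y : is_DAG D -> x != y -> connect D x y -> ~~ connect D y x.
Proof.
move=> HD Hne /connectP [p Hp Ey]; apply/negP => Cyx.
case: p Hp Ey => [|c p] /=; first by move=> _ Ey; move: Hne; rewrite Ey eqxx.
case/andP => Dxc Hp Ey.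
have Ccy : connect D c y by apply/connectP; exists p.
by move: (HD _ _ Dxc); rewrite (connect_trans Ccy Cyx).
Qed.

Lemma MP U D : maximal_in_UEC U D -> Pmax U D.
Proof.
move=> [HD Hm]; split.
  by move=> x y Dxy; apply: (G1 HD); exact: connect1.
move=> x y Hne Hxy; apply/negPn/negP => Hn.
case: (boolP (connect D y x)) => Cyx.
- have Hyx := G1 HD Cyx.
  have Cxy : ~~ connect D x y by apply: dag_conn_asym HD.1 _ Cyx; rewrite eq_sym.
  have [Hd Hi] := add_ok HD Hyx Cxy.
  apply: (Hm y x) Hd Hi; first by rewrite eq_sym.
  by rewrite /adj orbC.
- have [Hd Hi] := add_ok HD Hxy Cyx.
  exact: (Hm x y) Hd Hi.
Qed.

Lemma adj_char U D x y : is_DAG D -> Pmax U D ->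
  adj D x y = (x != y) && (nsub U x y || nsub U y x).
Proof.
move=> HD [P1 P2]; apply/idP/idP.
- case/orP => H.
  + have -> : x != y by apply/eqP => E; subst y; move: (dag_noloop x HD); rewrite H.
    by rewrite (P1 _ _ H).
  + have -> : x != y by apply/eqP => E; subst y; move: (dag_noloop x HD); rewrite H.
    by rewrite (P1 _ _ H) orbT.
- case/andP => Hne /orP [H|H]; first exact: P2.
  by rewrite /adj orbC; apply: P2 => //; rewrite eq_sym.
Qed.

Lemma vs_trans U D1 D2 a b c : is_DAG D1 -> is_DAG D2 -> Pmax U D1 -> Pmax U D2 ->
  vstruct D1 a b c -> vstruct D2 a b c.
Proof.
move=> H1 H2 HP1 HP2.
rewrite /vstruct (adj_char _ _ H1 HP1) (adj_char _ _ H2 HP2).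
case/and4P => Dab Dcb Hac Hn; rewrite Hn Hac !andbT.
have Nab := HP1.1 _ _ Dab. have Ncb := HP1.1 _ _ Dcb.
have Hba : ~~ nsub U b a.
  apply/negP => Hba; move: Hn; by rewrite Hac (nsub_trans Ncb Hba) orbT.
have Hbc : ~~ nsub U b c.
  apply/negP => Hbc; move: Hn; by rewrite Hac (nsub_trans Nab Hbc).
have Hab' : a != b by apply/eqP => E; subst b; move: Hba; rewrite nsub_refl.
have Hcb' : c != b by apply/eqP => E; subst b; move: Hbc; rewrite nsub_refl.
move: (HP2.2 _ _ Hab' Nab) (HP2.2 _ _ Hcb' Ncb).
rewrite /adj => /orP [->|Dba]; last by move: Hba; rewrite (HP2.1 _ _ Dba).
move=> /orP [->//|Dbc]; by move: Hbc; rewrite (HP2.1 _ _ Dbc).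
Qed.

Lemma Mark U D1 D2 : is_DAG D1 -> is_DAG D2 -> Pmax U D1 -> Pmax U D2 ->
  markov_equiv D1 D2.
Proof.
move=> H1 H2 HP1 HP2; split.
  by move=> v w; rewrite (adj_char _ _ H1 HP1) (adj_char _ _ H2 HP2).
by move=> a b c; apply/idP/idP; [exact: (vs_trans H1 H2 HP1 HP2) | exact: (vs_trans H2 H1 HP2 HP1)].
Qed.

Lemma MarkP U e D0 D : in_UEC U e -> is_DAG D0 -> Pmax U D0 -> is_DAG D ->
  markov_equiv D D0 -> Pmax U D.
Proof.
move=> He HD0 HP0 HD [Madj Mvs]; split; last first.
  by move=> x y Hne Hxy; rewrite Madj; apply: HP0.2.
move=> x y Dxy; apply/negPn/negP => Hnxy.
have : adj D0 x y by rewrite -Madj /adj Dxy.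
rewrite (adj_char _ _ HD0 HP0) (negbTE Hnxy) /= => /andP [Hne Hyx].
case: (boolP [exists s, [&& src e s, connect e s x & ~~ connect e s y]]);
  last first.
  move/existsPn => Hn; move/negP: Hnxy; apply; apply/(nsub_src He) => s Ss Cx.
  by move: (Hn s); rewrite Ss Cx /= negbK.
move/existsP => [s /and3P [Ss Sx Sy]].
have Nsx := G1 He Sx.
have Nsy : ~~ nsub U s y by apply/negP => /(src_nsub He Ss); rewrite (negbTE Sy).
have Nys : ~~ nsub U y s by apply/negP => /(nsub_to_src He Ss); rewrite (negbTE Sy).
have Nxs : ~~ nsub U x s by apply/negP => H; move: Nys; rewrite (nsub_trans Hyx H).
have Hsx : s != x by apply/eqP => E; subst s; move: Nxs; rewrite nsub_refl.
have Hsy : s != y by apply/eqP => E; subst s; move: Sy; rewrite connect0.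
have D0sx : D0 s x.
  move: (HP0.2 _ _ Hsx Nsx); rewrite /adj => /orP [//|D0xs].
  by move: Nxs; rewrite (HP0.1 _ _ D0xs).
have D0yx : D0 y x.
  have : adj D0 x y by rewrite -Madj /adj Dxy.
  rewrite /adj => /orP [D0xy|//]. by move: Hnxy; rewrite (HP0.1 _ _ D0xy).
have : vstruct D0 s x y.
  by rewrite /vstruct D0sx D0yx Hsy (adj_char _ _ HD0 HP0) (negbTE Nsy) (negbTE Nys) andbF.
rewrite -Mvs => /and4P [_ Dyx _ _].
by move: (dag_no2 HD Dxy); rewrite Dyx.
Qed.

Definition D0 U : rel T := fun x y =>
  [&& x != y, nsub U x y & (~~ nsub U y x) || (enum_rank x < enum_rank y)].

Lemma D0_dag U : is_DAG (D0 U).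
Proof.
apply: (@dag_pot _ _ (fun x => #|[set z | nsub U z x]| * #|T| + enum_rank x)).
move=> x y /and3P [Hne Hxy Hor].
have Sxy : [set z | nsub U z x] \subset [set z | nsub U z y].
  by apply/subsetP => z; rewrite !inE => H; apply: nsub_trans H Hxy.
have Hr : enum_rank x < #|T| by case: (enum_rank x) => /= m; rewrite cardE.
case: (boolP (nsub U y x)) Hor => Hyx /= Hor.
- have Syx : [set z | nsub U z y] \subset [set z | nsub U z x].
    by apply/subsetP => z; rewrite !inE => H; apply: nsub_trans H Hyx.
  have E : #|[set z | nsub U z x]| = #|[set z | nsub U z y]|.
    by apply/eqP; rewrite eqn_leq !subset_leq_card.
  rewrite E. lia.
- have Hlt : #|[set z | nsub U z x]| < #|[set z | nsub U z y]|.
    apply: proper_card; apply/properP; split => //.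
    by exists y; rewrite !inE ?nsub_refl.
  have : #|[set z | nsub U z x]|.+1 * #|T| <= #|[set z | nsub U z y]| * #|T|.
    by rewrite leq_mul2r Hlt orbT.
  rewrite mulSn => H.
  apply: (@leq_trans (#|T| + #|[set z | nsub U z x]| * #|T|)).
    by rewrite addnC ltn_add2r.
  exact: leq_trans H (leq_addr _ _).
Qed.

Lemma D0_P U : Pmax U (D0 U).
Proof.
split; first by move=> x y /and3P [].
move=> x y Hne Hxy; rewrite /adj /D0 Hne Hxy eq_sym Hne /=.
case: (boolP (nsub U y x)) => //= Hyx.
have : enum_rank x != enum_rank y.
  by apply/eqP => /enum_rank_inj E; move: Hne; rewrite E eqxx.
by rewrite neq_ltn.
Qed.

End Main.

Theorem corollary5p2 (T : finType) (U : rel T) :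
  UEC_rep U ->
  exists D0 : rel T, is_DAG D0 /\
    forall D : rel T, is_DAG D -> (maximal_in_UEC U D <-> markov_equiv D D0).
Proof.
case=> e He. exists (D0 U); split; first exact: (@D0_dag _ U).
move=> D HD; split.
- move=> Hm. exact: (Mark HD (@D0_dag _ U) (MP Hm) (@D0_P _ U)).
- move=> Hme.
  have HP := MarkP He (@D0_dag _ U) (@D0_P _ U) HD Hme.
  apply: PM_max => //. exact: Q He HD HP.
Qed.
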